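(* Let $E$ be a finite nonempty set, $f:2^E\to\mathbb{N}$ an integral polymatroid rank function, $d\in\mathbb{N}$, and let $C_e:\mathbb{N}\times\mathbb{N}\to\mathbb{R}_+$, $e\in E$, be regular functions. Then for every $\vec t\in\mathbb{N}^E$, every optimal solution $\vec x^*(\vec t,d)$ of $P(\vec t,d)$ and every $\vec t'\in\mathbb{N}^E$ with $\|\vec t-\vec t'\|=1$, there is an optimal solution $\vec x^*(\vec t',d)$ of $P(\vec t',d)$ with $\|\vec x^*(\vec t,d)-\vec x^*(\vec t',d)\|\le 2$.
   Context: $\mathbb{N}=\{0,1,2,\dots\}$. A set function $f:2^E\to\mathbb{N}$ is an integral polymatroid rank function if $f(\emptyset)=0$, $f$ is monotone ($f(U)\le f(V)$ for $U\subseteq V$) and submodular. For $\vec x\in\mathbb{N}^E$, $x(U)=\sum_{e\in U}x_e$; $\mathbb{B}_f(d)=\{\vec x\in\mathbb{N}^E: x(U)\le f(U)\ \forall U\subseteq E,\ x(E)=d\}$. $P(\vec t,d)$: minimize $\sum_{e\in E}C_e(x_e;t_e)$ subject to $\vec x\in\mathbb{B}_f(d)$. $\|\cdot\|$ is the $L_1$-norm. For $C:\mathbb{N}\times\mathbb{N}\to\mathbb{R}$, $C^-(x;t)=C(x;t)-C(x-1;t)$ for $x\ge1$; $C$ is regular if $C^-(x;t)\le C^-(x;t+1)$ and $C^-(x;t+1)\le C^-(x+1;t)$ for all $x\ge1$, $t\in\mathbb{N}$. *)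

(* Defs.v *)
From mathcomp Require Import all_boot all_order all_algebra.
Set Implicit Arguments. Unset Strict Implicit. Unset Printing Implicit Defensive.
Import Order.TTheory GRing.Theory Num.Theory.

Definition polymatroid_rank (E : finType) (f : {set E} -> nat) : Prop :=
  [/\ f set0 = 0%N,
      (forall U V : {set E}, U \subset V -> (f U <= f V)%N) &
      (forall U V : {set E}, (f (U :|: V) + f (U :&: V) <= f U + f V)%N)].

Definition xsum (E : finType) (x : E -> nat) (U : {set E}) : nat :=
  (\sum_(e in U) x e)%N.

Definition in_base (E : finType) (f : {set E} -> nat) (d : nat) (x : E -> nat) : Prop :=
  (forall U : {set E}, (xsum x U <= f U)%N) /\ xsum x [set: E] = d.

(* C^-(x;t) = C(x;t) - C(x-1;t), for x >= 1 *)
Definition Cminus (R : pzRingType) (C : nat -> nat -> R) (x t : nat) : R :=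
  (C x t - C x.-1 t)%R.

Definition regular (R : realFieldType) (C : nat -> nat -> R) : Prop :=
  forall x t : nat, (1 <= x)%N ->
    (Cminus C x t <= Cminus C x t.+1)%R /\ (Cminus C x t.+1 <= Cminus C x.+1 t)%R.

Definition total_cost (R : realFieldType) (E : finType) (C : E -> nat -> nat -> R)
  (t x : E -> nat) : R := (\sum_(e : E) C e (x e) (t e))%R.

Definition optimal (R : realFieldType) (E : finType) (f : {set E} -> nat) (d : nat)
  (C : E -> nat -> nat -> R) (t x : E -> nat) : Prop :=
  in_base f d x /\
  forall y : E -> nat, in_base f d y -> (total_cost C t x <= total_cost C t y)%R.

(* L1 distance on N^E; (a - b) + (b - a) = |a - b| with truncated subtraction *)
Definition l1dist (E : finType) (x y : E -> nat) : nat :=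
  (\sum_(e : E) ((x e - y e) + (y e - x e)))%N.

(* Main.v *)
Require Import Defs.
From mathcomp Require Import all_boot all_order all_algebra.
From mathcomp Require Import zify.
Import Order.TTheory GRing.Theory Num.Theory.
Set Implicit Arguments. Unset Strict Implicit. Unset Printing Implicit Defensive.

Section Exch.
Variables (E : finType) (f : {set E} -> nat) (d : nat).
Hypothesis fP : polymatroid_rank f.
Implicit Types (x y : E -> nat) (U V : {set E}) (a b i : E).

Definition tight (x : E -> nat) U := xsum x U == f U.

Lemma xsumID x (A B : {set E}) : xsum x A = xsum x (A :&: B) + xsum x (A :\: B).
Proof. by rewrite /xsum (big_setID (A:=A) B). Qed.

Lemma xsumUI x (U V : {set E}) : xsum x (U :|: V) + xsum x (U :&: V) = xsum x U + xsum x V.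
Proof.
rewrite (xsumID x (U :|: V) U) (xsumID x V U).
have -> : (U :|: V) :&: U = U by apply/setP => e; rewrite !inE; case: (e \in U); case: (e \in V).
have -> : (U :|: V) :\: U = V :\: U by apply/setP => e; rewrite !inE; case: (e \in U); case: (e \in V).
rewrite [V :&: U]setIC; lia.
Qed.

Lemma xsum0 x : xsum x set0 = 0.
Proof. by rewrite /xsum big_set0. Qed.

Lemma tightUI x (U V : {set E}) : (forall W, xsum x W <= f W) -> tight x U -> tight x V ->
  tight x (U :|: V) && tight x (U :&: V).
Proof.
case: fP => _ _ sub Hx; rewrite /tight => /eqP hU /eqP hV.
have h1 := Hx (U :|: V); have h2 := Hx (U :&: V); have h3 := sub U V.
have h4 := xsumUI x U V.
apply/andP; split; apply/eqP; lia.
Qed.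

Definition mv (x : E -> nat) a b := fun e =>
  if e == b then (x e).+1 else if e == a then (x e).-1 else x e.

Lemma sum_ind (U : {set E}) a : (\sum_(e in U) ((e == a) : nat))%N = (a \in U).
Proof.
rewrite big_mkcond (bigD1 a) //= big1 => [|e /negbTE ->]; last by case: ifP.
by rewrite eqxx addn0; case: (a \in U).
Qed.

Lemma xsum_mv x a b U : a != b -> 0 < x a ->
  xsum (mv x a b) U + (a \in U) = xsum x U + (b \in U).
Proof.
move=> ab xa; rewrite /xsum -!sum_ind -!big_split /=; apply: eq_bigr => e _.
rewrite /mv; case: (eqVneq e b) => [->|eb]; first by case: (eqVneq b a) ab => // _ _; lia.
case: (eqVneq e a) => [->|ea]; lia.
Qed.

Lemma mv_base x a b : a != b -> 0 < x a -> in_base f d x ->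
  (forall U, b \in U -> a \notin U -> xsum x U < f U) -> in_base f d (mv x a b).
Proof.
move=> ab xa [Hx Hd] H; split; last first.
  have := xsum_mv [set: E] ab xa; rewrite !in_setT; lia.
move=> U; have h := xsum_mv U ab xa; have hU := Hx U.
case aU: (a \in U); case bU: (b \in U); move: h hU; try lia.
have := H U; rewrite aU bU => /(_ isT isT); lia.
Qed.

Lemma exchange x y i : in_base f d x -> in_base f d y -> y i < x i ->
  exists j, [/\ x j < y j, in_base f d (mv x i j) & in_base f d (mv y j i)].
Proof.
move=> [Hx Hxd] [Hy Hyd] yx.
pose X0 := \bigcup_(U | tight x U && (i \notin U)) U.
pose Y0 := \bigcap_(U | tight y U && (i \in U)) U.
have HX0 : tight x X0 && (i \notin X0).
  rewrite /X0; apply: (big_ind (fun S => tight x S && (i \notin S))).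
  - by rewrite /tight xsum0 in_set0; case: fP => -> _ _.
  - move=> S T /andP[tS iS] /andP[tT iT].
    by rewrite in_setU (negbTE iS) (negbTE iT) andbT; case/andP: (tightUI Hx tS tT).
  - by [].
have HY0 : (Y0 = setT) \/ (tight y Y0 && (i \in Y0)).
  rewrite /Y0; apply: (big_ind (fun S => (S = setT) \/ (tight y S && (i \in S)))).
  - by left.
  - move=> S T [->|/andP[tS iS]] [->|/andP[tT iT]].
    + by left; rewrite setIT.
    + by right; rewrite setTI tT iT.
    + by right; rewrite setIT tS iS.
    + right; rewrite in_setI iS iT !andbT.
      by case/andP: (tightUI Hy tS tT).
  - by move=> U H; right.
have subX : forall U, tight x U -> i \notin U -> U \subset X0.
  by move=> U tU iU; rewrite /X0; apply: (bigcup_sup U); rewrite tU iU.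
have subY : forall U, tight y U -> i \in U -> Y0 \subset U.
  by move=> U tU iU; rewrite /Y0; apply: (bigcap_inf U); rewrite tU iU.
have iY0 : i \in Y0 by case: HY0 => [->|/andP[]//]; rewrite in_setT.
case/andP: HX0 => tX0 iX0.
have iD : i \in Y0 :\: X0 by rewrite in_setD iY0 iX0.
case: (boolP [exists j, (j \in Y0 :\: X0) && (x j < y j)]); last first.
  rewrite negb_exists => /forallP Hn.
  have lt : xsum y (Y0 :\: X0) < xsum x (Y0 :\: X0).
    rewrite /xsum (bigD1 i iD) [X in _ < X](bigD1 i iD) /=.
    rewrite -addSn; apply: leq_add => //.
    apply: leq_sum => e /andP[eD _]; have eD2 : e \in Y0 :\: X0 by exact: eD.
    have := Hn e; rewrite eD2 /=; lia.
  exfalso.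
  have sx := xsumID x Y0 X0; have sy := xsumID y Y0 X0.
  have ux := xsumUI x Y0 X0.
  move/eqP: tX0 => tX0.
  case: HY0 => [EY|/andP[tY _]].
    rewrite EY in lt sx sy ux; rewrite setTI in sx sy.
    have := Hy X0; rewrite -Hyd in Hxd; move: Hxd; lia.
  move/eqP: tY => tY.
  have h1 := Hx (Y0 :|: X0); have h2 := Hy (Y0 :&: X0).
  case: fP => _ _ sub; have := sub Y0 X0; lia.
case/existsP => j /andP[]; rewrite in_setD => /andP[jX jY] xy.
have ij : i != j by apply/eqP => eij; move: xy yx; rewrite eij; lia.
have ji : j != i by rewrite eq_sym.
exists j; split => //.
- apply: mv_base => //; first exact: (leq_ltn_trans (leq0n _) yx).
  move=> U jU iU; rewrite ltn_neqAle Hx andbT; apply/negP => tU.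
  have := subX U tU iU => /subsetP /(_ j jU).
  by rewrite (negbTE jX).
- apply: mv_base => //; first exact: (leq_ltn_trans (leq0n _) xy).
  move=> U iU jU; rewrite ltn_neqAle Hy andbT; apply/negP => tU.
  have := subY U tU iU => /subsetP /(_ j jY).
  by rewrite (negbTE jU).
Qed.
End Exch.
From mathcomp Require Import ring lra.
From Stdlib Require Import FunctionalExtensionality.

Section Main.
Variables (R : realFieldType) (E : finType) (f : {set E} -> nat) (d : nat)
  (C : E -> nat -> nat -> R).
Hypothesis fP : polymatroid_rank f.
Hypothesis Creg : forall e, regular (C e).
Implicit Types (x y z : E -> nat) (a b i j k e : E).

Lemma cmp_coord e (a b s s' : nat) : (1 <= a)%N -> (a <= b)%N ->
  (s' = s \/ s' = s.+1 \/ (s = s'.+1 /\ (a < b)%N)) ->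
  (Cminus (C e) a s <= Cminus (C e) b s')%R.
Proof.
have L1 : forall (s m n : nat), (1 <= m)%N -> (m <= n)%N -> (Cminus (C e) m s <= Cminus (C e) n s)%R.
  move=> s0 m; elim=> [|n IH] m1 mn; first by move: m1 mn; lia.
  case: (ltngtP m n.+1) mn => // [mn _|-> _]; last by [].
  have n1 : (1 <= n)%N by move: m1 mn; lia.
  have [h1 h2] := Creg e s0 n1.
  by apply: (le_trans (IH m1 _)) => //; apply: (le_trans h1 h2).
move=> a1 ab [->|[->|[-> lt]]]; first exact: L1.
  have [h1 _] := Creg e s a1.
  by apply: (le_trans h1); apply: L1.
have [_ h2] := Creg e s' a1.
by apply: (le_trans h2); apply: L1.
Qed.

Lemma split2R (F : E -> R) a b : a != b ->
  (\sum_e F e = F a + F b + \sum_(e | (e != a) && (e != b)) F e)%R.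
Proof.
move=> ab; rewrite (bigD1 a) //= (bigD1 b) /=; last by rewrite eq_sym.
by rewrite addrA.
Qed.

Lemma split2N (F : E -> nat) a b : a != b ->
  (\sum_e F e = F a + F b + \sum_(e | (e != a) && (e != b)) F e)%N.
Proof.
move=> ab; rewrite (bigD1 a) //= (bigD1 b) /=; last by rewrite eq_sym.
by rewrite addnA.
Qed.

Lemma sum2R (g h : E -> R) a b : a != b ->
  (forall e, e != a -> e != b -> g e = h e) ->
  (\sum_e g e = \sum_e h e + (g a - h a) + (g b - h b))%R.
Proof.
move=> ab H; rewrite (split2R g ab) (split2R h ab).
rewrite (eq_bigr h); last by move=> e /andP[ea eb]; apply: H.
ring.
Qed.

Lemma sum2N (g h : E -> nat) a b : a != b ->
  (forall e, e != a -> e != b -> g e = h e) ->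
  (\sum_e g e + h a + h b = \sum_e h e + g a + g b)%N.
Proof.
move=> ab H; rewrite (split2N g ab) (split2N h ab).
rewrite (eq_bigr h); last by move=> e /andP[ea eb]; apply: H.
lia.
Qed.

Lemma cost_mv t x a b : a != b ->
  total_cost C t (mv x a b) =
  (total_cost C t x + Cminus (C b) (x b).+1 (t b) - Cminus (C a) (x a) (t a))%R.
Proof.
move=> ab; rewrite /total_cost (sum2R (h := fun e => C e (x e) (t e)) ab).
  rewrite /mv eqxx (negbTE ab) eqxx /Cminus /=; ring.
by move=> e ea eb; rewrite /mv (negbTE ea) (negbTE eb).
Qed.

Lemma dist_mv x y i j : i != j -> (y i < x i)%N -> (x j < y j)%N ->
  (l1dist x (mv y j i) + 2 = l1dist x y)%N.
Proof.
move=> ij yx xy; rewrite /l1dist.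
have := sum2N (g := fun e => (x e - mv y j i e) + (mv y j i e - x e))
   (h := fun e => (x e - y e) + (y e - x e)) ij.
have ji : j != i by rewrite eq_sym.
rewrite /mv !eqxx (negbTE ji) /=.
move=> H.
have {}H : _ := H (fun e ei ej => ltac:(by rewrite (negbTE ei) (negbTE ej))).
move: yx xy H; lia.
Qed.

Lemma step t t' x y i j : optimal f d C t x -> optimal f d C t' y ->
  (y i < x i)%N -> (x j < y j)%N ->
  in_base f d (mv x i j) -> in_base f d (mv y j i) ->
  (Cminus (C j) (x j).+1 (t j) <= Cminus (C j) (y j) (t' j))%R ->
  (Cminus (C i) (y i).+1 (t' i) <= Cminus (C i) (x i) (t i))%R ->
  optimal f d C t' (mv y j i).
Proof.
move=> [_ ox] [yb oy] yx xy bx b_y hj hi.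
have ij : i != j by apply/eqP => eij; move: xy yx; rewrite eij; lia.
have ji : j != i by rewrite eq_sym.
split => // z zb.
have h1 := ox _ bx; have h2 := oy _ zb.
rewrite cost_mv // in h1; rewrite cost_mv //.
lra.
Qed.

Lemma le_d y e : in_base f d y -> (y e <= d)%N.
Proof.
move=> [_ <-]; rewrite /xsum (bigD1 e) ?in_setT //=; exact: leq_addr.
Qed.

Lemma opt_exists t' : (exists y, in_base f d y) -> exists y, optimal f d C t' y.
Proof.
move=> [y0 b0].
pose toF (g : {ffun E -> 'I_d.+1}) : E -> nat := fun e => nat_of_ord (g e).
pose P := fun g => [forall U : {set E}, (xsum (toF g) U <= f U)%N] && (xsum (toF g) setT == d).
have PE : forall g, P g <-> in_base f d (toF g).
  move=> g; rewrite /P /in_base; split.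
    by case/andP => /forallP H /eqP.
  by move=> [H1 H2]; apply/andP; split; [apply/forallP|apply/eqP].
have toFK : forall y, in_base f d y -> exists g, toF g = y.
  move=> y yb; exists [ffun e => inord (y e)]; apply: functional_extensionality => e.
  by rewrite /toF ffunE inordK // ltnS; apply: le_d.
have [g0 g0y] := toFK _ b0.
have P0 : P g0 by apply/PE; rewrite g0y.
case: (@real_arg_minP R _ g0 P (fun g => total_cost C t' (toF g)) P0).
  by move=> g _; apply: num_real.
move=> gm Pm Hm; exists (toF gm); split; first by apply/PE.
move=> z zb; have [gz gzE] := toFK _ zb; rewrite -gzE; apply: Hm; apply: (proj2 (PE gz)); by rewrite gzE.
Qed.

End Main.

Lemma pick_pos (E : finType) (x y : E -> nat) k : (2 <= \sum_e (x e - y e))%N ->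
  exists i, (y i < x i)%N /\ (i != k \/ (y i + 2 <= x i)%N).
Proof.
move=> H.
case: (boolP [exists i, (y i < x i) && ((i != k) || (y i + 2 <= x i))]).
  by case/existsP => i /andP[h1 /orP h2]; exists i.
rewrite negb_exists => /forallP Hn; exfalso.
move: H; rewrite (bigD1 k) //= big1 => [|e ek].
  by have := Hn k; rewrite eqxx /=; lia.
by have := Hn e; rewrite ek /=; lia.
Qed.

Theorem corollary3p3 (R : realFieldType) (E : finType) (f : {set E} -> nat) (d : nat)
  (C : E -> nat -> nat -> R) :
  (0 < #|E|)%N ->
  polymatroid_rank f ->
  (forall e x t, (0 <= C e x t)%R) ->
  (forall e, regular (C e)) ->
  forall (t : E -> nat) (xs : E -> nat), optimal f d C t xs ->
  forall t' : E -> nat, l1dist t t' = 1%N ->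
  exists xs' : E -> nat, optimal f d C t' xs' /\ (l1dist xs xs' <= 2)%N.
Proof.
move=> _ fP _ Creg t xs oxs t' dt.
move: dt; rewrite /l1dist => /eqP /sum_nat_eq1 [k [_ Hk H0]].
have tE : forall e, e != k -> t' e = t e.
  by move=> e ek; have := H0 e ek isT; lia.
have tk : t' k = (t k).+1 \/ t k = (t' k).+1 by move: Hk; lia.
have [y0 oy0] := opt_exists C t' (ex_intro _ xs oxs.1).
suff main : forall n y, (l1dist xs y <= n)%N -> optimal f d C t' y ->
    exists y', optimal f d C t' y' /\ (l1dist xs y' <= 2)%N.
  exact: (main _ y0 (leqnn _) oy0).
elim=> [|n IH] y hn oy.
  by exists y; split => //; lia.
case: (leqP (l1dist xs y) 2) => [h2|h3]; first by exists y.
have [xb xd] := oxs.1; have [yb yd] := oy.1.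
have hd : l1dist xs y = (\sum_e (xs e - y e) + \sum_e (y e - xs e))%N
  by rewrite /l1dist big_split.
have sx : xsum xs setT = \sum_e xs e by rewrite /xsum; apply: eq_bigl => e; rewrite in_setT.
have sy : xsum y setT = \sum_e y e by rewrite /xsum; apply: eq_bigl => e; rewrite in_setT.
have hS : (\sum_e xs e + \sum_e (y e - xs e) = \sum_e y e + \sum_e (xs e - y e))%N.
  rewrite -!big_split; apply: eq_bigr => e _ /=; lia.
have step' : forall i j, (y i < xs i)%N -> (xs j < y j)%N ->
    in_base f d (mv xs i j) -> in_base f d (mv y j i) ->
    (Cminus (C j) (xs j).+1 (t j) <= Cminus (C j) (y j) (t' j))%R ->
    (Cminus (C i) (y i).+1 (t' i) <= Cminus (C i) (xs i) (t i))%R ->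
    exists y', optimal f d C t' y' /\ (l1dist xs y' <= 2)%N.
  move=> i j yi xj bx b_y hj hi.
  have ij : i != j by apply/eqP => eij; move: xj yi; rewrite eij; lia.
  apply: (IH (mv y j i)); last exact: (step oxs oy yi xj bx b_y hj hi).
  have := dist_mv ij yi xj; lia.
case: tk => tk.
- have [i [yi ik]] := @pick_pos _ xs y k ltac:(lia).
  have [j [xj bx b_y]] := exchange fP oxs.1 oy.1 yi.
  apply: (step' i j) => //.
    apply: (cmp_coord Creg); [lia | lia | ].
    case: (eqVneq j k) => [->|jk]; [by right; left | by left; apply: tE].
  apply: (cmp_coord Creg); [lia | lia | ].
  case: (eqVneq i k) ik => [eik [//|ik]|ik' _]; last by left; rewrite tE.
  by right; right; split; [rewrite eik | lia].
- have [j [xj jk]] := @pick_pos _ y xs k ltac:(lia).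
  have [i [yi b_y bx]] := exchange fP oy.1 oxs.1 xj.
  apply: (step' i j) => //.
    apply: (cmp_coord Creg); [lia | lia | ].
    case: (eqVneq j k) jk => [ejk [//|jk]|jk' _]; last by left; apply: tE.
    by right; right; split; [rewrite ejk | lia].
  apply: (cmp_coord Creg); [lia | lia | ].
  case: (eqVneq i k) => [->|ik]; [by right; left | by left; rewrite tE].
Qed.
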